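(* A $4$-dimensional $pp$-wave $g_{ppw}=2\,du\,dv+H(u,x_1,x_2)\,du^2+dx_1^2+dx_2^2$ is (locally) isotropically conformally Einstein if and only if its Weyl tensor is harmonic, $\operatorname{div}W=0$.
   Context: A Lorentzian metric $g$ is isotropically conformally Einstein if (locally) there is a smooth function $f$ with $\nabla f$ nowhere zero and null, $g(\nabla f,\nabla f)=0$, such that $e^{-f}g$ is an Einstein metric; equivalently, $\operatorname{Hes}_f+\rho+\frac12 df\otimes df=\lambda g$ for some function $\lambda$ (quasi-Einstein equation with $\mu=-\frac12$), where $\rho$ is the Ricci tensor and $\operatorname{Hes}_f=\nabla df$. $W$ denotes the Weyl conformal curvature tensor and $\operatorname{div}W(X,Y,Z)=-\frac12\{(\nabla_X\rho)(Y,Z)-(\nabla_Y\rho)(X,Z)\}+\frac1{12}\{X(\tau)g(Y,Z)-Y(\tau)g(X,Z)\}$ with $\tau$ the scalar curvature. *)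

(* Defs.v *)
From Stdlib Require Import Reals Lra List ClassicalEpsilon.
Open Scope R_scope.

(* Points of R^4 with coordinates (u, v, x1, x2) = indices 0,1,2,3. *)
Definition pt : Type := (R * R * R * R)%type.

Definition coord (p : pt) (i : nat) : R :=
  match p with (a, b, c, d) =>
    match i with 0%nat => a | 1%nat => b | 2%nat => c | _ => d end end.

Definition upd (p : pt) (i : nat) (t : R) : pt :=
  match p with (a, b, c, d) =>
    match i with
    | 0%nat => (t, b, c, d) | 1%nat => (a, t, c, d)
    | 2%nat => (a, b, t, d) | 3%nat => (a, b, c, t)
    | _ => p end end.

Definition dist4 (p q : pt) : R :=
  Rmax (Rmax (Rabs (coord p 0 - coord q 0)) (Rabs (coord p 1 - coord q 1)))
       (Rmax (Rabs (coord p 2 - coord q 2)) (Rabs (coord p 3 - coord q 3))).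

Definition is_open (U : pt -> Prop) : Prop :=
  forall p, U p -> exists e, 0 < e /\ forall q, dist4 p q < e -> U q.

Definition cont_on (U : pt -> Prop) (F : pt -> R) : Prop :=
  forall p, U p -> forall eps, 0 < eps -> exists del, 0 < del /\
    forall q, U q -> dist4 p q < del -> Rabs (F q - F p) < eps.

Definition smooth_on (U : pt -> Prop) (F : pt -> R) : Prop :=
  exists D : list nat -> pt -> R,
    (forall p, U p -> D nil p = F p) /\
    (forall l i p, (i < 4)%nat -> U p ->
        derivable_pt_lim (fun t => D l (upd p i t)) (coord p i) (D (i :: l) p)) /\
    (forall l, cont_on U (D l)).

(* Partial derivative d/dx^i (the unique limit when it exists). *)
Definition pd (i : nat) (F : pt -> R) (p : pt) : R :=
  epsilon (inhabits 0) (fun l => derivable_pt_lim (fun t => F (upd p i t)) (coord p i) l).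

Definition sum4 (f : nat -> R) : R := f 0%nat + f 1%nat + f 2%nat + f 3%nat.

(* Metric components g p i j and inverse metric components gi p i j. *)
Section Curv.
Variables (g gi : pt -> nat -> nat -> R).

Definition Gam (k i j : nat) (p : pt) : R :=
  / 2 * sum4 (fun l => gi p k l *
     (pd i (fun q => g q j l) p + pd j (fun q => g q i l) p - pd l (fun q => g q i j) p)).

(* R(d_i,d_j) d_k = Riem l i j k d_l *)
Definition Riem (l i j k : nat) (p : pt) : R :=
  pd i (Gam l j k) p - pd j (Gam l i k) p
  + sum4 (fun m => Gam l i m p * Gam m j k p - Gam l j m p * Gam m i k p).

Definition Ric (j k : nat) (p : pt) : R := sum4 (fun i => Riem i i j k p).

Definition Scal (p : pt) : R := sum4 (fun j => sum4 (fun k => gi p j k * Ric j k p)).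

(* (nabla_i rho)(d_j, d_k) *)
Definition covRic (i j k : nat) (p : pt) : R :=
  pd i (Ric j k) p - sum4 (fun m => Gam m i j p * Ric m k p + Gam m i k p * Ric j m p).

Definition divW (i j k : nat) (p : pt) : R :=
  - / 2 * (covRic i j k p - covRic j i k p)
  + / 12 * (pd i Scal p * g p j k - pd j Scal p * g p i k).

Definition Hess (f : pt -> R) (i j : nat) (p : pt) : R :=
  pd i (fun q => pd j f q) p - sum4 (fun k => Gam k i j p * pd k f p).

Definition grad (f : pt -> R) (i : nat) (p : pt) : R := sum4 (fun j => gi p i j * pd j f p).

Definition loc_iso_conf_Einstein (U : pt -> Prop) : Prop :=
  forall p, U p -> exists V : pt -> Prop, is_open V /\ V p /\ (forall q, V q -> U q) /\
    exists f : pt -> R, smooth_on V f /\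
      (forall q, V q -> exists i, (i < 4)%nat /\ grad f i q <> 0) /\
      (forall q, V q -> sum4 (fun i => sum4 (fun j => gi q i j * pd i f q * pd j f q)) = 0) /\
      exists lam : pt -> R, forall q i j, V q -> (i < 4)%nat -> (j < 4)%nat ->
        Hess f i j q + Ric i j q + / 2 * (pd i f q * pd j f q) = lam q * g q i j.

Definition harmonic_Weyl (U : pt -> Prop) : Prop :=
  forall q i j k, U q -> (i < 4)%nat -> (j < 4)%nat -> (k < 4)%nat -> divW i j k q = 0.
End Curv.

Definition Hof (H : R -> R -> R -> R) (p : pt) : R := H (coord p 0) (coord p 2) (coord p 3).

Definition ppw_g (H : R -> R -> R -> R) (p : pt) (i j : nat) : R :=
  match i, j with
  | 0%nat, 0%nat => Hof H p
  | 0%nat, 1%nat | 1%nat, 0%nat | 2%nat, 2%nat | 3%nat, 3%nat => 1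
  | _, _ => 0 end.

Definition ppw_gi (H : R -> R -> R -> R) (p : pt) (i j : nat) : R :=
  match i, j with
  | 1%nat, 1%nat => - Hof H p
  | 0%nat, 1%nat | 1%nat, 0%nat | 2%nat, 2%nat | 3%nat, 3%nat => 1
  | _, _ => 0 end.

(* Main.v *)
Require Import Defs.
From Stdlib Require Import Reals Lra Lia List ClassicalEpsilon FunctionalExtensionality PropExtensionality.
From Coquelicot Require Import Coquelicot.
From Stdlib Require Import ClassicalEpsilon.
Open Scope R_scope.


Lemma pd_eq i F p l :
  derivable_pt_lim (fun t => F (upd p i t)) (coord p i) l -> pd i F p = l.
Proof.
  intro Hl. unfold pd.
  pose proof (epsilon_spec (inhabits 0) (fun l => derivable_pt_lim (fun t => F (upd p i t)) (coord p i) l) (ex_intro _ l Hl)) as He.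
  eapply uniqueness_limite; eassumption.
Qed.

Lemma pd_const i c p : pd i (fun _ => c) p = 0.
Proof. apply pd_eq. apply derivable_pt_lim_const. Qed.

Lemma dpl_local f g x l e : 0 < e -> (forall t, Rabs (t - x) < e -> f t = g t) ->
  derivable_pt_lim f x l -> derivable_pt_lim g x l.
Proof.
  intros He Hfg Hf eps Heps. destruct (Hf eps Heps) as [d Hd].
  assert (Hm : 0 < Rmin d e) by (apply Rmin_pos; [apply cond_pos|lra]).
  exists (mkposreal _ Hm). intros h Hh0 Hh. simpl in Hh.
  rewrite <- !Hfg.
  - apply Hd; auto. eapply Rlt_le_trans; [exact Hh|apply Rmin_l].
  - rewrite Rminus_diag, Rabs_R0; lra.
  - replace (x + h - x) with h by ring. eapply Rlt_le_trans; [exact Hh|apply Rmin_r].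
Qed.

Ltac dpt p := let a := fresh "a" in let b := fresh "b" in let c := fresh "c" in let d := fresh "d" in destruct p as [[[a b] c] d].

Lemma dist4_lt p q e : (forall k, (k < 4)%nat -> Rabs (coord p k - coord q k) < e) -> dist4 p q < e.
Proof.
  intro H. unfold dist4.
  pose proof (H 0%nat ltac:(lia)); pose proof (H 1%nat ltac:(lia));
  pose proof (H 2%nat ltac:(lia)); pose proof (H 3%nat ltac:(lia)).
  repeat apply Rmax_lub_lt; auto.
Qed.

Lemma dist4_lt_inv p q e k : (k < 4)%nat -> dist4 p q < e -> Rabs (coord p k - coord q k) < e.
Proof.
  intros Hk H. unfold dist4 in H.
  destruct k as [|[|[|[|k]]]]; try lia;
  eapply Rle_lt_trans; try exact H.
  - eapply Rle_trans; [apply Rmax_l|apply Rmax_l].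
  - eapply Rle_trans; [apply Rmax_r|apply Rmax_l].
  - eapply Rle_trans; [apply Rmax_l|apply Rmax_r].
  - eapply Rle_trans; [apply Rmax_r|apply Rmax_r].
Qed.

Lemma coord_upd_same p i t : (i < 4)%nat -> coord (upd p i t) i = t.
Proof. intros. dpt p. destruct i as [|[|[|[|i]]]]; try lia; reflexivity. Qed.

Lemma coord_upd_other p i j t : (j < 4)%nat -> i <> j -> coord (upd p i t) j = coord p j.
Proof. intros. dpt p. destruct j as [|[|[|[|j]]]]; try lia; destruct i as [|[|[|[|i]]]]; try lia; reflexivity. Qed.

Lemma upd_big p i t : (4 <= i)%nat -> upd p i t = p.
Proof. intros. dpt p. destruct i as [|[|[|[|i]]]]; try lia; reflexivity. Qed.

Lemma upd_upd_same p i s t : upd (upd p i s) i t = upd p i t.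
Proof. dpt p. destruct i as [|[|[|[|i]]]]; reflexivity. Qed.

Lemma upd_comm p i j s t : i <> j -> upd (upd p i s) j t = upd (upd p j t) i s.
Proof. intros. dpt p. destruct i as [|[|[|[|i]]]]; destruct j as [|[|[|[|j]]]]; try lia; reflexivity. Qed.

Lemma upd_coord p i : upd p i (coord p i) = p.
Proof. dpt p. destruct i as [|[|[|[|i]]]]; reflexivity. Qed.

Lemma dist4_upd p i t e : 0 < e -> Rabs (t - coord p i) < e -> dist4 p (upd p i t) < e.
Proof.
  intros He Ht. apply dist4_lt. intros k Hk.
  destruct (Nat.lt_ge_cases i 4) as [Hi|Hi].
  - destruct (Nat.eq_dec i k) as [->|Hne].
    + rewrite coord_upd_same by lia. rewrite Rabs_minus_sym; auto.
    + rewrite coord_upd_other by auto. rewrite Rminus_diag, Rabs_R0; auto.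
  - rewrite upd_big by auto. rewrite Rminus_diag, Rabs_R0; auto.
Qed.

Lemma dist4_tri p q r : dist4 p r <= dist4 p q + dist4 q r.
Proof.
  assert (forall k, (k<4)%nat -> Rabs (coord p k - coord r k) <= dist4 p q + dist4 q r).
  { intros k Hk.
    assert (A: forall e, dist4 p q < e -> Rabs (coord p k - coord q k) < e) by (intros; apply dist4_lt_inv; auto).
    assert (B: forall e, dist4 q r < e -> Rabs (coord q k - coord r k) < e) by (intros; apply dist4_lt_inv; auto).
    replace (coord p k - coord r k) with ((coord p k - coord q k) + (coord q k - coord r k)) by ring.
    eapply Rle_trans; [apply Rabs_triang|].
    apply Rplus_le_compat; apply Rnot_lt_le; intro C.
    - specialize (A _ C); lra.
    - specialize (B _ C); lra. }
  apply Rnot_lt_le; intro C.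
  assert (dist4 p r < dist4 p r).
  { apply dist4_lt. intros k Hk. eapply Rle_lt_trans; [apply H; auto| exact C]. }
  lra.
Qed.

Lemma dist4_sym p q : dist4 p q = dist4 q p.
Proof. unfold dist4. rewrite (Rabs_minus_sym (coord p 0)), (Rabs_minus_sym (coord p 1)), (Rabs_minus_sym (coord p 2)), (Rabs_minus_sym (coord p 3)). reflexivity. Qed.

Lemma dist4_refl p : dist4 p p = 0.
Proof. unfold dist4. rewrite !Rminus_diag, !Rabs_R0, !Rmax_left; lra. Qed.

Lemma dist4_ge0 p q : 0 <= dist4 p q.
Proof. unfold dist4. eapply Rle_trans; [apply Rabs_pos|]. eapply Rle_trans; [apply Rmax_l|apply Rmax_l]. Qed.

Lemma ball_open p e : is_open (fun q => dist4 p q < e).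
Proof.
  intros q Hq. exists (e - dist4 p q). split; [lra|].
  intros r Hr. pose proof (dist4_tri p q r). lra.
Qed.

Lemma loc_pd V F G i p : is_open V -> V p -> (forall q, V q -> F q = G q) -> pd i F p = pd i G p.
Proof.
  intros HV Hp HFG. destruct (HV p Hp) as [e [He He2]].
  unfold pd. f_equal. apply functional_extensionality. intro l.
  apply propositional_extensionality. split; intro D; eapply dpl_local; try exact D; try exact He;
  intros t Ht; [|symmetry]; apply HFG, He2, dist4_upd; auto.
Qed.

Definition vind (F : pt -> R) := forall q t, F (upd q 1 t) = F q.

Lemma coord_upd1 q t i : i <> 1%nat -> coord (upd q 1 t) i = coord q i.
Proof. intros. dpt q. destruct i as [|[|[|[|i]]]]; try lia; reflexivity. Qed.

Lemma pd1_vind F q : vind F -> pd 1 F q = 0.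
Proof.
  intro HF. apply pd_eq. eapply derivable_pt_lim_ext; [|apply derivable_pt_lim_const].
  intro t. simpl. symmetry. apply HF.
Qed.

Lemma pd_vind i F : vind F -> vind (pd i F).
Proof.
  intros HF q t. destruct (Nat.eq_dec i 1) as [->|Hi].
  - rewrite !pd1_vind; auto.
  - unfold pd. rewrite coord_upd1 by auto. f_equal. apply functional_extensionality. intro l.
    f_equal. apply functional_extensionality. intro s.
    rewrite upd_comm by auto. apply HF.
Qed.

Lemma vind_Hof H : vind (Hof H).
Proof. intros q t. dpt q. reflexivity. Qed.

Section PPW.
Variable H : R -> R -> R -> R.
Notation g := (ppw_g H).
Notation gi := (ppw_gi H).
Definition Hd i p := pd i (Hof H) p.

Lemma Hd_eta i p : pd i (fun q => Hof H q) p = Hd i p.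
Proof. reflexivity. Qed.

Lemma Hd1 p : Hd 1 p = 0.
Proof. apply pd1_vind, vind_Hof. Qed.

Lemma Hd_vind i : vind (Hd i).
Proof. apply pd_vind, vind_Hof. Qed.

Definition G (k i j : nat) (p : pt) : R :=
  match k, i, j with
  | S O, O, O => / 2 * Hd 0 p
  | S O, O, S (S O) | S O, S (S O), O => / 2 * Hd 2 p
  | S O, O, S (S (S O)) | S O, S (S (S O)), O => / 2 * Hd 3 p
  | S (S O), O, O => - / 2 * Hd 2 p
  | S (S (S O)), O, O => - / 2 * Hd 3 p
  | _, _, _ => 0 end.

Lemma pd_big i F p : (4 <= i)%nat -> pd i F p = 0.
Proof.
  intros. apply pd_eq. eapply derivable_pt_lim_ext; [|apply derivable_pt_lim_const].
  intro t. rewrite upd_big by auto. reflexivity.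
Qed.

Lemma Gam_val k i j p : Gam g gi k i j p = G k i j p.
Proof.
  unfold Gam, sum4.
  destruct k as [|[|[|[|k]]]]; destruct i as [|[|[|[|i]]]]; destruct j as [|[|[|[|j]]]];
  cbv beta iota delta [ppw_g ppw_gi G];
  rewrite ?pd_const; try (rewrite (pd_big (S (S (S (S _))))) by lia); 
  rewrite ?Hd_eta; rewrite ?Hd1; try ring.
Qed.
End PPW.

Lemma Gam_fun H k i j : Gam (ppw_g H) (ppw_gi H) k i j = G H k i j.
Proof. apply functional_extensionality. intro p. apply Gam_val. Qed.

Section Smooth.
Variables (H : R -> R -> R -> R) (U : pt -> Prop) (D : list nat -> pt -> R).
Hypothesis HU : is_open U.
Hypothesis HD0 : forall p, U p -> D nil p = Hof H p.
Hypothesis HD1 : forall l i p, (i < 4)%nat -> U p ->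
        derivable_pt_lim (fun t => D l (upd p i t)) (coord p i) (D (i :: l) p).
Hypothesis HD2 : forall l, cont_on U (D l).

Lemma pdD l i p : U p -> (i < 4)%nat -> pd i (D l) p = D (i :: l) p.
Proof. intros. apply pd_eq. auto. Qed.

Lemma HdD i p : U p -> (i < 4)%nat -> Hd H i p = D (i :: nil) p.
Proof.
  intros. unfold Hd. rewrite (loc_pd U (Hof H) (D nil)); auto.
  - apply pdD; auto.
  - intros; symmetry; auto.
Qed.

Lemma pd_scalHd c i m p : U p -> (i < 4)%nat -> (m < 4)%nat ->
  pd i (fun q => c * Hd H m q) p = c * D (i :: m :: nil) p.
Proof.
  intros. rewrite (loc_pd U _ (fun q => c * D (m :: nil) q)); auto.
  - apply pd_eq. apply (derivable_pt_lim_scal (fun t => D (m :: nil) (upd p i t))). auto.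
  - intros. rewrite HdD; auto.
Qed.

Lemma D1 m p : U p -> (m < 4)%nat -> D (1%nat :: m :: nil) p = 0.
Proof.
  intros. rewrite <- pdD by auto. rewrite (loc_pd U _ (Hd H m)); auto.
  - apply pd1_vind, Hd_vind.
  - intros. rewrite HdD; auto.
Qed.

Definition RicV (j k : nat) (p : pt) : R :=
  match j, k with O, O => - / 2 * (D (2 :: 2 :: nil)%nat p + D (3 :: 3 :: nil)%nat p) | _, _ => 0 end.

Lemma Ric_val j k p : U p -> (j < 4)%nat -> (k < 4)%nat ->
  Ric (ppw_g H) (ppw_gi H) j k p = RicV j k p.
Proof.
  intros Hp Hj Hk. unfold Ric, Riem, sum4. rewrite !Gam_fun.
  destruct j as [|[|[|[|j]]]]; destruct k as [|[|[|[|k]]]]; try lia;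
  cbv beta iota delta [G RicV];
  rewrite ?pd_const, ?pd_scalHd by (auto; lia); rewrite ?D1 by (auto; lia); ring.
Qed.
End Smooth.

Lemma G_vind H k i j q t : G H k i j (upd q 1 t) = G H k i j q.
Proof.
  pose proof (Hd_vind H) as HV. unfold vind in HV.
  destruct k as [|[|[|[|k]]]]; destruct i as [|[|[|[|i]]]]; destruct j as [|[|[|[|j]]]];
  cbv beta iota delta [G]; rewrite ?HV; reflexivity.
Qed.

Lemma pdG_vind H m k i j q t : pd m (G H k i j) (upd q 1 t) = pd m (G H k i j) q.
Proof. apply pd_vind. intros q' t'. apply G_vind. Qed.

Lemma Ric_vind H j k : vind (Ric (ppw_g H) (ppw_gi H) j k).
Proof.
  intros q t. unfold Ric, Riem, sum4. rewrite !Gam_fun. rewrite !pdG_vind, !G_vind. reflexivity.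
Qed.

Section Smooth2.
Variables (H : R -> R -> R -> R) (U : pt -> Prop) (D : list nat -> pt -> R).
Hypothesis HU : is_open U.
Hypothesis HD0 : forall p, U p -> D nil p = Hof H p.
Hypothesis HD1 : forall l i p, (i < 4)%nat -> U p ->
        derivable_pt_lim (fun t => D l (upd p i t)) (coord p i) (D (i :: l) p).
Hypothesis HD2 : forall l, cont_on U (D l).

Notation Rc := (Ric (ppw_g H) (ppw_gi H)).
Notation R0 := (Ric (ppw_g H) (ppw_gi H) 0 0).

Lemma Scal_val p : U p -> Scal (ppw_g H) (ppw_gi H) p = 0.
Proof.
  intros Hp. unfold Scal, sum4. rewrite !(Ric_val H U D) by (auto; lia).
  cbv beta iota delta [RicV ppw_gi]. ring.
Qed.

Lemma pdRic0 i j k p : U p -> (j < 4)%nat -> (k < 4)%nat -> (j <> 0 \/ k <> 0)%nat ->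
  pd i (Rc j k) p = 0.
Proof.
  intros Hp Hj Hk Hjk. rewrite (loc_pd U _ (fun _ => 0)); auto.
  - apply pd_const.
  - intros q Hq. rewrite (Ric_val H U D) by auto.
    destruct j as [|[|[|[|j]]]]; destruct k as [|[|[|[|k]]]]; try lia; reflexivity.
Qed.

Definition dR (i j k : nat) (p : pt) : R :=
  match j, k with O, O => pd i R0 p | _, _ => 0 end.

Lemma divW_val i j k p : U p -> (i < 4)%nat -> (j < 4)%nat -> (k < 4)%nat ->
  divW (ppw_g H) (ppw_gi H) i j k p = - / 2 * (dR i j k p - dR j i k p).
Proof.
  intros Hp Hi Hj Hk. unfold divW, covRic, sum4.
  rewrite !(loc_pd U (Scal (ppw_g H) (ppw_gi H)) (fun _ => 0)) by (auto; intros; apply Scal_val; auto).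
  rewrite !pd_const, !Gam_val, !(Ric_val H U D) by (auto; lia).
  destruct i as [|[|[|[|i]]]]; destruct j as [|[|[|[|j]]]]; destruct k as [|[|[|[|k]]]]; try lia;
  cbv beta iota delta [G RicV dR];
  rewrite ?(pdRic0 _ (S _)) by (auto; lia); rewrite ?(pdRic0 _ _ (S _)) by (auto; lia); ring.
Qed.

Lemma harmonic_iff : harmonic_Weyl (ppw_g H) (ppw_gi H) U <->
  (forall p, U p -> pd 2 R0 p = 0 /\ pd 3 R0 p = 0).
Proof.
  split.
  - intros HW p Hp. split.
    + pose proof (HW p 2 0 0 Hp ltac:(lia) ltac:(lia) ltac:(lia))%nat as E.
      rewrite divW_val in E by (auto; lia). unfold dR in E. lra.
    + pose proof (HW p 3 0 0 Hp ltac:(lia) ltac:(lia) ltac:(lia))%nat as E.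
      rewrite divW_val in E by (auto; lia). unfold dR in E. lra.
  - intros HR q i j k Hq Hi Hj Hk. rewrite divW_val by auto.
    assert (A : forall m, (m < 4)%nat -> pd m R0 q = 0 \/ m = 0%nat).
    { intros m Hm. destruct (HR q Hq) as [E2 E3].
      destruct m as [|[|[|[|m]]]]; try lia; auto.
      left. apply pd1_vind, Ric_vind. }
    unfold dR. destruct j, k, i; try ring;
    repeat match goal with |- context [pd ?m R0 q] =>
      let E := fresh in destruct (A m ltac:(lia)) as [E|E]; [rewrite E| discriminate E] end; ring.
Qed.
End Smooth2.

Lemma dpl_eq f x a b : derivable_pt_lim f x a -> a = b -> derivable_pt_lim f x b.
Proof. intros H ->; exact H. Qed.
Lemma dpl_plus f g x a b : derivable_pt_lim f x a -> derivable_pt_lim g x b ->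
  derivable_pt_lim (fun t => f t + g t) x (a + b).
Proof. intros. apply (derivable_pt_lim_plus f g); auto. Qed.
Lemma dpl_minus f g x a b : derivable_pt_lim f x a -> derivable_pt_lim g x b ->
  derivable_pt_lim (fun t => f t - g t) x (a - b).
Proof. intros. apply (derivable_pt_lim_minus f g); auto. Qed.
Lemma dpl_mult f g x a b : derivable_pt_lim f x a -> derivable_pt_lim g x b ->
  derivable_pt_lim (fun t => f t * g t) x (a * g x + f x * b).
Proof. intros. apply (derivable_pt_lim_mult f g); auto. Qed.
Lemma dpl_const c x : derivable_pt_lim (fun _ => c) x 0.
Proof. apply derivable_pt_lim_const. Qed.
Lemma dpl_scal c f x a : derivable_pt_lim f x a -> derivable_pt_lim (fun t => c * f t) x (c * a).
Proof. intros. apply (derivable_pt_lim_scal f); auto. Qed.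
Lemma dpl_id x : derivable_pt_lim (fun t => t) x 1.
Proof. apply derivable_pt_lim_id. Qed.
Lemma dpl_exp f x a : derivable_pt_lim f x a -> derivable_pt_lim (fun t => exp (f t)) x (exp (f x) * a).
Proof.
  intros Hf. apply (derivable_pt_lim_comp f exp); auto. apply derivable_pt_lim_exp.
Qed.

Lemma null_deriv_const (phi : R -> R) a b :
  (forall t, Rmin a b <= t <= Rmax a b -> derivable_pt_lim phi t 0) -> phi b = phi a.
Proof.
  intros Hd.
  destruct (MVT_gen phi a b (fun _ => 0)) as [c [Hc E]].
  - intros x Hx. apply is_derive_Reals. apply Hd. lra.
  - intros x Hx. apply derivable_continuous_pt. exists 0. apply Hd. auto.
  - lra.
Qed.

Lemma step_const (F : pt -> R) p e m :
  (m < 4)%nat ->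
  (forall q, dist4 p q < e -> derivable_pt_lim (fun t => F (upd q m t)) (coord q m) 0) ->
  forall q s, dist4 p q < e -> Rabs (s - coord p m) < e -> F (upd q m s) = F q.
Proof.
  intros Hm Hd q s Hq Hs.
  pose (phi := fun t => F (upd q m t)).
  assert (E : phi s = phi (coord q m)).
  { apply null_deriv_const. intros t Ht.
    assert (Hin : dist4 p (upd q m t) < e).
    { apply dist4_lt. intros k Hk. destruct (Nat.eq_dec m k) as [->|Hne].
      - rewrite coord_upd_same by auto.
        pose proof (dist4_lt_inv _ _ _ k Hk Hq).
        apply Rabs_def1.
        + apply Rabs_def2 in H. apply Rabs_def2 in Hs.
          destruct (Rle_dec (coord q k) s); [rewrite Rmin_left in Ht by lra|rewrite Rmin_right in Ht by lra]; lra.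
        + apply Rabs_def2 in H. apply Rabs_def2 in Hs.
          destruct (Rle_dec (coord q k) s); [rewrite Rmax_right in Ht by lra|rewrite Rmax_left in Ht by lra]; lra.
      - rewrite coord_upd_other by auto. apply dist4_lt_inv; auto. }
    pose proof (Hd _ Hin) as D0. rewrite coord_upd_same in D0 by auto.
    unfold phi. eapply derivable_pt_lim_ext; [|exact D0].
    intro x. simpl. rewrite upd_upd_same. reflexivity. }
  unfold phi in E. rewrite upd_coord in E. exact E.
Qed.

Lemma dpl_opp f x a : derivable_pt_lim f x a -> derivable_pt_lim (fun t => - f t) x (- a).
Proof. intros. apply (derivable_pt_lim_opp f); auto. Qed.

Ltac dchain :=
  repeat first [ apply dpl_plus | apply dpl_minus | apply dpl_opp | apply dpl_mult | apply dpl_exp | apply dpl_const ].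


Lemma in_ball_upd p q e m : (m < 4)%nat -> 0 < e -> dist4 p q < e -> dist4 p (upd q m (coord p m)) < e.
Proof.
  intros Hm He Hq. apply dist4_lt. intros k Hk. destruct (Nat.eq_dec m k) as [->|Hne].
  - rewrite coord_upd_same by auto. rewrite Rminus_diag, Rabs_R0; auto.
  - rewrite coord_upd_other by auto. apply dist4_lt_inv; auto.
Qed.

Lemma ball_const (F : pt -> R) p e : 0 < e ->
  (forall q m, dist4 p q < e -> (m < 4)%nat -> derivable_pt_lim (fun t => F (upd q m t)) (coord q m) 0) ->
  forall q, dist4 p q < e -> F q = F p.
Proof.
  intros He Hd q Hq.
  assert (S : forall m r, (m < 4)%nat -> dist4 p r < e -> F (upd r m (coord p m)) = F r).
  { intros m r Hm Hr. apply (step_const F p e m Hm); auto;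
    try (intros; apply Hd; auto); rewrite Rminus_diag, Rabs_R0; auto. }
  pose (q1 := upd q 0 (coord p 0)). pose (q2 := upd q1 1 (coord p 1)). pose (q3 := upd q2 2 (coord p 2)).
  assert (B1 : dist4 p q1 < e) by (apply in_ball_upd; auto).
  assert (B2 : dist4 p q2 < e) by (apply in_ball_upd; auto).
  assert (B3 : dist4 p q3 < e) by (apply in_ball_upd; auto).
  rewrite <- (S 0%nat q) by auto. fold q1. rewrite <- (S 1%nat q1) by auto. fold q2.
  rewrite <- (S 2%nat q2) by auto. fold q3. rewrite <- (S 3%nat q3) by auto.
  f_equal. unfold q3, q2, q1. dpt p. dpt q. reflexivity.
Qed.

Lemma open_inter (A B : pt -> Prop) : is_open A -> is_open B -> is_open (fun q => A q /\ B q).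
Proof.
  intros HA HB q [Aq Bq]. destruct (HA q Aq) as [e1 [He1 H1]]. destruct (HB q Bq) as [e2 [He2 H2]].
  exists (Rmin e1 e2). split; [apply Rmin_pos; auto|].
  intros r Hr. split; [apply H1|apply H2]; eapply Rlt_le_trans; eauto; [apply Rmin_l|apply Rmin_r].
Qed.

Lemma dpl_local_R f g x l e : 0 < e -> (forall t, Rabs (t - x) < e -> f t = g t) ->
  derivable_pt_lim f x l -> derivable_pt_lim g x l.
Proof.
  intros He Hfg Hf eps Heps. destruct (Hf eps Heps) as [d Hd].
  assert (Hm : 0 < Rmin d e) by (apply Rmin_pos; [apply cond_pos|lra]).
  exists (mkposreal _ Hm). intros h Hh0 Hh. simpl in Hh.
  rewrite <- !Hfg.
  - apply Hd; auto. eapply Rlt_le_trans; [exact Hh|apply Rmin_l].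
  - rewrite Rminus_diag, Rabs_R0; lra.
  - replace (x + h - x) with h by ring. eapply Rlt_le_trans; [exact Hh|apply Rmin_r].
Qed.

Lemma o_plus f g x a b : derivable_pt_lim f x a -> derivable_pt_lim g x b ->
  derivable_pt_lim (fun t => f t + g t) x (a + b).
Proof. intros. apply (derivable_pt_lim_plus f g); auto. Qed.
Lemma o_mult f g x a b : derivable_pt_lim f x a -> derivable_pt_lim g x b ->
  derivable_pt_lim (fun t => f t * g t) x (a * g x + f x * b).
Proof. intros. apply (derivable_pt_lim_mult f g); auto. Qed.

Definition cont_at (f : R -> R) (x : R) := forall eps, 0 < eps -> exists del, 0 < del /\
  forall y, Rabs (y - x) < del -> Rabs (f y - f x) < eps.

Lemma cont_at_pt f x : cont_at f x -> continuity_pt f x.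
Proof.
  intros H eps Heps. destruct (H eps Heps) as [del [Hd Hy]].
  exists del. split; auto. intros y [_ Hy2]. apply Hy. exact Hy2.
Qed.

Lemma pt_cont_at f x : continuity_pt f x -> cont_at f x.
Proof.
  intros H eps Heps. destruct (H eps Heps) as [del [Hd Hy]].
  exists del. split; auto. intros y Hyx.
  destruct (Req_dec y x) as [->|Hne].
  - rewrite Rminus_diag, Rabs_R0; auto.
  - apply (Hy y). split; [split; [exact I| auto]|exact Hyx].
Qed.

Lemma cont_at_cont f x : cont_at f x -> continuous f x.
Proof. intros. apply continuity_pt_filterlim, cont_at_pt; auto. Qed.

Lemma deriv_cont_at f x l : derivable_pt_lim f x l -> cont_at f x.
Proof. intros. apply pt_cont_at, derivable_continuous_pt. exists l; auto. Qed.

Lemma RInt_minus_R f g a b : ex_RInt f a b -> ex_RInt g a b ->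
  RInt (fun x => f x - g x) a b = RInt f a b - RInt g a b.
Proof. intros. exact (RInt_minus f g a b H H0). Qed.

Lemma RInt_bound f a b B : ex_RInt f a b ->
  (forall t, Rmin a b <= t <= Rmax a b -> Rabs (f t) <= B) -> Rabs (RInt f a b) <= Rabs (b - a) * B.
Proof.
  intros Hex Hb. destruct (Rle_dec a b) as [Hab|Hab].
  - rewrite (Rabs_right (b - a)) by lra. apply abs_RInt_le_const; auto.
    intros t Ht. apply Hb. rewrite Rmin_left, Rmax_right by lra. auto.
  - pose proof (opp_RInt_swap f b a (ex_RInt_swap _ _ _ Hex)) as E. change (- RInt f b a = RInt f a b) in E.
    rewrite <- E.
    rewrite Rabs_Ropp, (Rabs_left (b - a)) by lra. replace (- (b - a)) with (a - b) by ring.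
    apply abs_RInt_le_const; [lra| apply ex_RInt_swap; auto|].
    intros t Ht. apply Hb. rewrite Rmin_right, Rmax_left by lra. auto.
Qed.

Lemma ex_RInt_cont f a b : (forall x, cont_at f x) -> ex_RInt f a b.
Proof. intros. apply (@ex_RInt_continuous R_CompleteNormedModule). intros. apply cont_at_cont; auto. Qed.

Lemma RInt_deriv f a v : (forall x, cont_at f x) -> derivable_pt_lim (fun x => RInt f a x) v (f v).
Proof.
  intros Hf. apply is_derive_Reals. apply (@is_derive_RInt R_CompleteNormedModule f (RInt f a) a v).
  - exists (mkposreal 1 Rlt_0_1). intros y _. apply RInt_correct, ex_RInt_cont; auto.
  - apply cont_at_cont; auto.
Qed.

Definition clamp (u0 del u : R) := Rmax (u0 - del) (Rmin (u0 + del) u).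

Lemma clamp_in u0 del u : 0 <= del -> Rabs (clamp u0 del u - u0) <= del.
Proof.
  intros. unfold clamp, Rmax, Rmin. repeat destruct Rle_dec; apply Rabs_le; lra.
Qed.

Lemma clamp_id u0 del u : Rabs (u - u0) <= del -> clamp u0 del u = u.
Proof.
  intros H. apply Rabs_le_between in H. unfold clamp. rewrite Rmin_right by lra. rewrite Rmax_right by lra. auto.
Qed.

Lemma clamp_lip u0 del x y : 0 <= del -> Rabs (clamp u0 del x - clamp u0 del y) <= Rabs (x - y).
Proof.
  intros. pose proof (Rle_abs (x - y)). pose proof (Rle_abs (- (x - y))). rewrite Rabs_Ropp in *.
  unfold clamp, Rmax, Rmin. repeat destruct Rle_dec; apply Rabs_le; lra.
Qed.

Lemma cont_at_clamp u0 del x : 0 <= del -> cont_at (clamp u0 del) x.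
Proof.
  intros H eps Heps. exists eps. split; auto. intros y Hy.
  eapply Rle_lt_trans; [apply clamp_lip; auto|auto].
Qed.

Lemma cont_at_comp f g x : cont_at g x -> cont_at f (g x) -> cont_at (fun y => f (g y)) x.
Proof.
  intros Hg Hf eps Heps. destruct (Hf eps Heps) as [d1 [Hd1 H1]].
  destruct (Hg d1 Hd1) as [d2 [Hd2 H2]]. exists d2. split; [exact Hd2|].
  intros y Hy. apply H1. apply H2. exact Hy.
Qed.

Lemma cont_at_plus f g x : cont_at f x -> cont_at g x -> cont_at (fun y => f y + g y) x.
Proof.
  intros Hf Hg eps Heps. destruct (Hf (eps/2) ltac:(lra)) as [d1 [Hd1 H1]].
  destruct (Hg (eps/2) ltac:(lra)) as [d2 [Hd2 H2]]. exists (Rmin d1 d2). split; [apply Rmin_pos; auto|].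
  intros y Hy. specialize (H1 y (Rlt_le_trans _ _ _ Hy (Rmin_l _ _))). specialize (H2 y (Rlt_le_trans _ _ _ Hy (Rmin_r _ _))).
  replace (f y + g y - (f x + g x)) with ((f y - f x) + (g y - g x)) by ring.
  eapply Rle_lt_trans; [apply Rabs_triang|]. lra.
Qed.

Lemma cont_at_mult f g x : cont_at f x -> cont_at g x -> cont_at (fun y => f y * g y) x.
Proof.
  intros Hf Hg. apply pt_cont_at. apply (continuity_pt_mult f g); apply cont_at_pt; auto.
Qed.

Lemma cont_at_const c x : cont_at (fun _ => c) x.
Proof. intros eps He. exists 1. split; [lra|]. intros. rewrite Rminus_diag, Rabs_R0; auto. Qed.

Lemma tel_bound (x : nat -> R) : (forall n, Rabs (x (S n) - x n) <= (/2) ^ (S n)) ->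
  forall n m, (n <= m)%nat -> Rabs (x m - x n) <= (/2) ^ n - (/2) ^ m.
Proof.
  intros Hx n m Hnm. induction Hnm.
  - rewrite Rminus_diag, Rabs_R0. lra.
  - replace (x (S m) - x n) with ((x (S m) - x m) + (x m - x n)) by ring.
    eapply Rle_trans; [apply Rabs_triang|]. pose proof (Hx m). simpl in *. lra.
Qed.

Lemma half_pow_small eps : 0 < eps -> exists N, forall n, (n >= N)%nat -> (/2) ^ n < eps.
Proof.
  intros He. destruct (pow_lt_1_zero (/2) ltac:(rewrite Rabs_right; lra) eps He) as [N HN].
  exists N. intros n Hn. specialize (HN n Hn). rewrite Rabs_right in HN; auto.
  apply Rle_ge, pow_le; lra.
Qed.

Lemma half_pow_pos n : 0 < (/2) ^ n.
Proof. apply pow_lt; lra. Qed.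

Lemma tel_cauchy (x : nat -> R) : (forall n, Rabs (x (S n) - x n) <= (/2) ^ (S n)) -> Cauchy_crit x.
Proof.
  intros Hx eps He. destruct (half_pow_small (eps / 2) ltac:(lra)) as [N HN].
  exists N. intros n m Hn Hm. unfold Rdist.
  pose proof (tel_bound x Hx N n Hn). pose proof (tel_bound x Hx N m Hm).
  pose proof (HN N (le_n N)). pose proof (half_pow_pos n). pose proof (half_pow_pos m).
  replace (x n - x m) with ((x n - x N) - (x m - x N)) by ring.
  eapply Rle_lt_trans; [apply Rabs_triang|]. rewrite Rabs_Ropp. lra.
Qed.

Definition tlim (x : nat -> R) (H : Cauchy_crit x) : R := proj1_sig (Rcomplete.R_complete x H).

Lemma tlim_bound (x : nat -> R) (Hx : forall n, Rabs (x (S n) - x n) <= (/2) ^ (S n)) n :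
  Rabs (tlim x (tel_cauchy x Hx) - x n) <= (/2) ^ n.
Proof.
  unfold tlim. destruct (Rcomplete.R_complete x (tel_cauchy x Hx)) as [l Hl]. simpl.
  apply Rle_plus_epsilon. intros eps He. destruct (Hl eps He) as [N HN].
  specialize (HN (max N n) ltac:(lia)). unfold Rdist in HN.
  pose proof (tel_bound x Hx n (max N n) ltac:(lia)). pose proof (half_pow_pos (max N n)).
  replace (l - x n) with ((x (max N n) - x n) - (x (max N n) - l)) by ring.
  eapply Rle_trans; [apply Rabs_triang|]. rewrite Rabs_Ropp. lra.
Qed.

Lemma small_zero a : (forall n, Rabs a <= 2 * (/2) ^ n) -> a = 0.
Proof.
  intros H. destruct (Req_dec a 0) as [|Hne]; auto. exfalso.
  pose proof (Rabs_pos_lt a Hne).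
  destruct (half_pow_small (Rabs a / 2) ltac:(lra)) as [N HN].
  specialize (HN N (le_n N)). specialize (H N). lra.
Qed.

Fixpoint picard (kc : R -> R) (u0 del : R) (n : nat) : (R -> R) * (R -> R) :=
  match n with
  | O => (fun _ => 1, fun _ => 1)
  | S n => let (c, d) := picard kc u0 del n in
      (fun u => 1 + RInt d u0 (clamp u0 del u), fun u => 1 + RInt (fun s => kc s * c s) u0 (clamp u0 del u))
  end.

Section Picard.
Variables (kc : R -> R) (u0 del M : R).
Hypothesis Hkc : forall x, cont_at kc x.
Hypothesis HM : forall x, Rabs (kc x) <= M.
Hypothesis Hdel : 0 < del.
Hypothesis Hdel1 : del <= / 8.
Hypothesis HdelM : del * M <= / 8.

Definition cn n := fst (picard kc u0 del n).
Definition dn n := snd (picard kc u0 del n).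

Lemma cn_S n u : cn (S n) u = 1 + RInt (dn n) u0 (clamp u0 del u).
Proof. unfold cn, dn. simpl. destruct (picard kc u0 del n). reflexivity. Qed.
Lemma dn_S n u : dn (S n) u = 1 + RInt (fun s => kc s * cn n s) u0 (clamp u0 del u).
Proof. unfold cn, dn. simpl. destruct (picard kc u0 del n). reflexivity. Qed.

Lemma cont_RInt_clamp g x : (forall y, cont_at g y) -> cont_at (fun u => RInt g u0 (clamp u0 del u)) x.
Proof.
  intros Hg. apply (cont_at_comp (fun v => RInt g u0 v) (clamp u0 del)).
  - apply cont_at_clamp; lra.
  - eapply deriv_cont_at. apply RInt_deriv; auto.
Qed.

Lemma cont_at_ext f g x : (forall y, f y = g y) -> cont_at g x -> cont_at f x.
Proof. intros E H eps He. destruct (H eps He) as [d [Hd H2]]. exists d. split; auto. intros. rewrite !E. auto. Qed.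

Lemma cn_dn_cont n : (forall x, cont_at (cn n) x) /\ (forall x, cont_at (dn n) x).
Proof.
  induction n as [|n [IHc IHd]].
  - split; intro x; unfold cn, dn; simpl; apply cont_at_const.
  - split; intro x.
    + apply (cont_at_ext _ _ x (cn_S n)). apply cont_at_plus; [apply cont_at_const|].
      apply cont_RInt_clamp; auto.
    + apply (cont_at_ext _ _ x (dn_S n)). apply cont_at_plus; [apply cont_at_const|].
      apply cont_RInt_clamp; auto. intro y. apply cont_at_mult; auto.
Qed.

Lemma clamp_bound u : Rabs (clamp u0 del u - u0) <= del.
Proof. apply clamp_in; lra. Qed.

Lemma pm1 (a : R) : 1 + a - 1 = a.
Proof. ring. Qed.
Lemma pm2 (a b : R) : 1 + a - (1 + b) = a - b.
Proof. ring. Qed.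

Lemma diff_bound n u : Rabs (cn (S n) u - cn n u) <= (/2) ^ (S n) /\ Rabs (dn (S n) u - dn n u) <= (/2) ^ (S n).
Proof.
  revert u. induction n as [|n IH]; intro u.
  - rewrite cn_S, dn_S. unfold cn, dn; simpl. split.
    + rewrite pm1.
      eapply Rle_trans; [apply RInt_bound with (B := 1)|].
      * apply ex_RInt_cont; intros; apply cont_at_const.
      * intros; rewrite Rabs_R1; lra.
      * pose proof (clamp_bound u). lra.
    + rewrite pm1.
      eapply Rle_trans; [apply RInt_bound with (B := M)|].
      * apply ex_RInt_cont; intros; apply cont_at_mult; auto; apply cont_at_const.
      * intros; rewrite Rmult_1_r; auto.
      * pose proof (clamp_bound u). assert (0 <= M) by (pose proof (HM 0); pose proof (Rabs_pos (kc 0)); lra).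
        assert (Rabs (clamp u0 del u - u0) * M <= del * M) by (apply Rmult_le_compat_r; auto). lra.
  - destruct (cn_dn_cont n) as [Cc Cd]. destruct (cn_dn_cont (S n)) as [Cc' Cd'].
    rewrite (cn_S (S n)), (cn_S n), (dn_S (S n)), (dn_S n). split.
    + rewrite pm2, <- RInt_minus_R by (apply ex_RInt_cont; auto).
      eapply Rle_trans; [apply RInt_bound with (B := (/2) ^ (S n))|].
      * apply ex_RInt_cont; intros; apply cont_at_plus; auto. 
        apply (cont_at_ext _ (fun y => -1 * dn n y)); [intros; ring|]. apply cont_at_mult; auto; apply cont_at_const.
      * intros; apply IH.
      * pose proof (clamp_bound u). pose proof (pow_le (/2) (S n) ltac:(lra)).
        assert (Rabs (clamp u0 del u - u0) * (/2) ^ (S n) <= / 8 * (/2) ^ (S n)) by (apply Rmult_le_compat_r; lra).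
        simpl in *. lra.
    + rewrite pm2, <- RInt_minus_R by (apply ex_RInt_cont; intros; apply cont_at_mult; auto).
      rewrite (RInt_ext _ (fun x => kc x * (cn (S n) x - cn n x))) by (intros; simpl; ring).
      eapply Rle_trans; [apply RInt_bound with (B := M * (/2) ^ (S n))|].
      * apply ex_RInt_cont; intros; apply cont_at_mult; auto; apply cont_at_plus; auto. 
        apply (cont_at_ext _ (fun y => -1 * cn n y)); [intros; ring|]. apply cont_at_mult; auto; apply cont_at_const.
      * intros. rewrite Rabs_mult. apply Rmult_le_compat; auto using Rabs_pos. apply IH.
      * pose proof (clamp_bound u). pose proof (pow_le (/2) (S n) ltac:(lra)).
        assert (0 <= M) by (pose proof (HM 0); pose proof (Rabs_pos (kc 0)); lra).
        assert (Rabs (clamp u0 del u - u0) * (M * (/2) ^ (S n)) <= del * (M * (/2) ^ (S n))).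
        { apply Rmult_le_compat_r; auto. apply Rmult_le_pos; auto. }
        assert (del * M * (/2) ^ (S n) <= / 8 * (/2) ^ (S n)) by (apply Rmult_le_compat_r; lra).
        simpl in *. lra.
Qed.


Definition cl u := tlim (fun n => cn n u) (tel_cauchy _ (fun n => proj1 (diff_bound n u))).
Definition dl u := tlim (fun n => dn n u) (tel_cauchy _ (fun n => proj2 (diff_bound n u))).

Lemma cl_bound n u : Rabs (cl u - cn n u) <= (/2) ^ n.
Proof. apply (tlim_bound (fun n => cn n u)). Qed.
Lemma dl_bound n u : Rabs (dl u - dn n u) <= (/2) ^ n.
Proof. apply (tlim_bound (fun n => dn n u)). Qed.

Lemma lim_cont (F : R -> R) (Fn : nat -> R -> R) x :
  (forall n u, Rabs (F u - Fn n u) <= (/2) ^ n) -> (forall n, cont_at (Fn n) x) -> cont_at F x.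
Proof.
  intros Hb Hc eps He. destruct (half_pow_small (eps / 4) ltac:(lra)) as [N HN].
  destruct (Hc N (eps / 4) ltac:(lra)) as [d [Hd Hy]]. exists d. split; auto.
  intros y Hyx. specialize (Hy y Hyx). pose proof (Hb N y). pose proof (Hb N x). specialize (HN N (le_n N)).
  replace (F y - F x) with ((F y - Fn N y) + (Fn N y - Fn N x) - (F x - Fn N x)) by ring.
  eapply Rle_lt_trans; [apply Rabs_triang|]. rewrite Rabs_Ropp.
  eapply Rle_lt_trans; [apply Rplus_le_compat_r; apply Rabs_triang|]. lra.
Qed.

Lemma cl_cont x : cont_at cl x.
Proof. apply (lim_cont cl cn). apply cl_bound. intro n. apply (cn_dn_cont n). Qed.
Lemma dl_cont x : cont_at dl x.
Proof. apply (lim_cont dl dn). apply dl_bound. intro n. apply (cn_dn_cont n). Qed.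

Lemma M_nonneg : 0 <= M.
Proof. pose proof (HM 0); pose proof (Rabs_pos (kc 0)); lra. Qed.

Lemma cl_eq u : cl u = 1 + RInt dl u0 (clamp u0 del u).
Proof.
  apply Rminus_diag_uniq. apply small_zero. intro n.
  destruct (cn_dn_cont n) as [Cc Cd].
  pose proof (cl_bound (S n) u) as B1. rewrite cn_S in B1.
  assert (B2 : Rabs (RInt (fun x => dn n x - dl x) u0 (clamp u0 del u)) <= del * (/2) ^ n).
  { eapply Rle_trans; [apply RInt_bound with (B := (/2) ^ n)|].
    - apply ex_RInt_cont; intros; apply cont_at_plus; auto.
      apply (cont_at_ext _ (fun y => -1 * dl y)); [intros; ring|]. apply cont_at_mult; [apply cont_at_const|apply dl_cont].
    - intros. rewrite Rabs_minus_sym. apply dl_bound.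
    - pose proof (clamp_bound u). pose proof (half_pow_pos n). apply Rmult_le_compat_r; lra. }
  rewrite RInt_minus_R in B2 by (apply ex_RInt_cont; auto; apply dl_cont).
  replace (cl u - (1 + RInt dl u0 (clamp u0 del u))) with
    ((cl u - (1 + RInt (dn n) u0 (clamp u0 del u))) + (RInt (dn n) u0 (clamp u0 del u) - RInt dl u0 (clamp u0 del u))) by ring.
  eapply Rle_trans; [apply Rabs_triang|]. simpl in B1. pose proof (half_pow_pos n).
  assert (del * (/2) ^ n <= / 8 * (/2) ^ n) by (apply Rmult_le_compat_r; lra). lra.
Qed.

Lemma dl_eq u : dl u = 1 + RInt (fun s => kc s * cl s) u0 (clamp u0 del u).
Proof.
  apply Rminus_diag_uniq. apply small_zero. intro n.
  destruct (cn_dn_cont n) as [Cc Cd].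
  pose proof (dl_bound (S n) u) as B1. rewrite dn_S in B1.
  assert (B2 : Rabs (RInt (fun x => kc x * cn n x - kc x * cl x) u0 (clamp u0 del u)) <= del * (M * (/2) ^ n)).
  { eapply Rle_trans; [apply RInt_bound with (B := M * (/2) ^ n)|].
    - apply ex_RInt_cont; intros; apply cont_at_plus; auto. apply cont_at_mult; auto.
      apply (cont_at_ext _ (fun y => -1 * (kc y * cl y))); [intros; ring|]. apply cont_at_mult; [apply cont_at_const|].
      apply cont_at_mult; auto; apply cl_cont.
    - intros. replace (kc t * cn n t - kc t * cl t) with (kc t * (cn n t - cl t)) by ring.
      rewrite Rabs_mult. apply Rmult_le_compat; auto using Rabs_pos. rewrite Rabs_minus_sym. apply cl_bound.
    - pose proof (clamp_bound u). pose proof (half_pow_pos n). pose proof M_nonneg.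
      apply Rmult_le_compat_r; [apply Rmult_le_pos|]; lra. }
  rewrite RInt_minus_R in B2 by (apply ex_RInt_cont; intros; apply cont_at_mult; auto; apply cl_cont).
  replace (dl u - (1 + RInt (fun s => kc s * cl s) u0 (clamp u0 del u))) with
    ((dl u - (1 + RInt (fun s => kc s * cn n s) u0 (clamp u0 del u))) + (RInt (fun s => kc s * cn n s) u0 (clamp u0 del u) - RInt (fun s => kc s * cl s) u0 (clamp u0 del u))) by ring.
  eapply Rle_trans; [apply Rabs_triang|]. simpl in B1. pose proof (half_pow_pos n).
  assert (del * (M * (/2) ^ n) <= / 8 * (/2) ^ n) by (rewrite <- Rmult_assoc; apply Rmult_le_compat_r; lra).
  lra.
Qed.

Lemma in_small u t : Rabs (u - u0) < del -> Rabs (t - u) < del - Rabs (u - u0) -> Rabs (t - u0) <= del.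
Proof.
  intros. pose proof (Rabs_triang (t - u) (u - u0)). replace (t - u + (u - u0)) with (t - u0) in H1 by ring. lra.
Qed.

Lemma cl_deriv u : Rabs (u - u0) < del -> derivable_pt_lim cl u (dl u).
Proof.
  intros Hu. apply (dpl_local_R (fun v => 1 + RInt dl u0 v) cl u (dl u) (del - Rabs (u - u0))); [lra| |].
  - intros t Ht. rewrite cl_eq. rewrite clamp_id; auto. apply in_small with u; auto.
  - replace (dl u) with (0 + dl u) by ring. apply o_plus; [apply derivable_pt_lim_const|].
    apply RInt_deriv. apply dl_cont.
Qed.

Lemma dl_deriv u : Rabs (u - u0) < del -> derivable_pt_lim dl u (kc u * cl u).
Proof.
  intros Hu. apply (dpl_local_R (fun v => 1 + RInt (fun s => kc s * cl s) u0 v) dl u _ (del - Rabs (u - u0))); [lra| |].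
  - intros t Ht. rewrite dl_eq. rewrite clamp_id; auto. apply in_small with u; auto.
  - replace (kc u * cl u) with (0 + kc u * cl u) by ring. apply o_plus; [apply derivable_pt_lim_const|].
    apply (RInt_deriv (fun s => kc s * cl s)). intros; apply cont_at_mult; auto; apply cl_cont.
Qed.

Lemma cl_pos u : 3 / 4 <= cl u.
Proof.
  rewrite cl_eq.
  assert (Rabs (RInt dl u0 (clamp u0 del u)) <= del * 2).
  { eapply Rle_trans; [apply RInt_bound with (B := 2)|].
    - apply ex_RInt_cont, dl_cont.
    - intros. pose proof (dl_bound 0 t). unfold dn in H0; simpl in H0.
      pose proof (Rabs_triang (dl t - 1) 1). replace (dl t - 1 + 1) with (dl t) in H1 by ring. rewrite Rabs_R1 in H1. lra.
    - pose proof (clamp_bound u). apply Rmult_le_compat_r; lra. }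
  apply Rabs_le_between in H. lra.
Qed.

Lemma dl_pos u : 3 / 4 <= dl u.
Proof.
  rewrite dl_eq.
  assert (Rabs (RInt (fun s => kc s * cl s) u0 (clamp u0 del u)) <= del * (M * 2)).
  { eapply Rle_trans; [apply RInt_bound with (B := M * 2)|].
    - apply ex_RInt_cont. intros; apply cont_at_mult; auto; apply cl_cont.
    - intros. rewrite Rabs_mult. apply Rmult_le_compat; auto using Rabs_pos.
      pose proof (cl_bound 0 t). unfold cn in H0; simpl in H0.
      pose proof (Rabs_triang (cl t - 1) 1). replace (cl t - 1 + 1) with (cl t) in H1 by ring. rewrite Rabs_R1 in H1. lra.
    - pose proof (clamp_bound u). pose proof M_nonneg. apply Rmult_le_compat_r; [apply Rmult_le_pos|]; lra. }
  apply Rabs_le_between in H. lra.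
Qed.
End Picard.

Lemma ode_exists (k : R -> R) u0 e : 0 < e -> (forall u, Rabs (u - u0) < e -> cont_at k u) ->
  exists del (c d : R -> R), 0 < del /\ del < e /\ forall u, Rabs (u - u0) < del ->
    derivable_pt_lim c u (d u) /\ derivable_pt_lim d u (k u * c u) /\ 0 < c u /\ 0 < d u.
Proof.
  intros He Hk.
  destruct (Hk u0 ltac:(rewrite Rminus_diag, Rabs_R0; lra) 1 ltac:(lra)) as [d1 [Hd1 Hk1]].
  set (M := Rabs (k u0) + 1).
  assert (HM0 : 0 < M) by (unfold M; pose proof (Rabs_pos (k u0)); lra).
  set (del := Rmin (Rmin (e / 2) (d1 / 2)) (Rmin (/ 8) (/ (8 * M)))).
  assert (Hdp : 0 < del).
  { unfold del. repeat apply Rmin_pos; try lra. apply Rinv_0_lt_compat. lra. }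
  assert (Hde : del <= e / 2) by (unfold del; eapply Rle_trans; [apply Rmin_l|apply Rmin_l]).
  assert (Hdd : del <= d1 / 2) by (unfold del; eapply Rle_trans; [apply Rmin_l|apply Rmin_r]).
  assert (Hd8 : del <= / 8) by (unfold del; eapply Rle_trans; [apply Rmin_r|apply Rmin_l]).
  assert (HdM : del <= / (8 * M)) by (unfold del; eapply Rle_trans; [apply Rmin_r|apply Rmin_r]).
  set (kc := fun s => k (clamp u0 del s)).
  assert (Hkc : forall x, cont_at kc x).
  { intro x. apply (cont_at_comp k (clamp u0 del)); [apply cont_at_clamp; lra|].
    apply Hk. pose proof (clamp_in u0 del x ltac:(lra)). lra. }
  assert (HM : forall x, Rabs (kc x) <= M).
  { intro x. unfold kc. pose proof (clamp_in u0 del x ltac:(lra)).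
    specialize (Hk1 (clamp u0 del x) ltac:(lra)).
    pose proof (Rabs_triang (k (clamp u0 del x) - k u0) (k u0)).
    replace (k (clamp u0 del x) - k u0 + k u0) with (k (clamp u0 del x)) in H0 by ring. unfold M. lra. }
  assert (HdelM : del * M <= / 8).
  { apply Rmult_le_compat_r with (r := M) in HdM; [|lra].
    replace (/ (8 * M) * M) with (/ 8) in HdM by (field; lra). exact HdM. }
  exists del, (cl kc u0 del M Hkc HM Hdp Hd8 HdelM), (dl kc u0 del M Hkc HM Hdp Hd8 HdelM).
  split; [auto|]. split; [lra|]. intros u Hu. split; [|split; [|split]].
  - apply cl_deriv; auto.
  - replace (k u) with (kc u) by (unfold kc; rewrite clamp_id; auto; lra). apply dl_deriv; auto.
  - pose proof (cl_pos kc u0 del M Hkc HM Hdp Hd8 HdelM u). lra.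
  - pose proof (dl_pos kc u0 del M Hkc HM Hdp Hd8 HdelM u). lra.
Qed.

Inductive gen (w : R -> R) (Kn : nat -> R -> R) : (R -> R) -> Prop :=
 | g_w : gen w Kn w
 | g_K n : gen w Kn (Kn n)
 | g_c r : gen w Kn (fun _ => r)
 | g_p f g : gen w Kn f -> gen w Kn g -> gen w Kn (fun u => f u + g u)
 | g_m f g : gen w Kn f -> gen w Kn g -> gen w Kn (fun u => f u * g u).

Section Gen.
Variables (w : R -> R) (Kn : nat -> R -> R) (I : R -> Prop).
Hypothesis Hw : forall u, I u -> derivable_pt_lim w u (- Kn 0%nat u - / 2 * (w u * w u)).
Hypothesis HK : forall n u, I u -> derivable_pt_lim (Kn n) u (Kn (S n) u).

Lemma gen_deriv phi : gen w Kn phi -> exists psi, gen w Kn psi /\ forall u, I u -> derivable_pt_lim phi u (psi u).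
Proof.
  induction 1 as [| n | r | f g Hf [pf [Gf Df]] Hg [pg [Gg Dg]] | f g Hf [pf [Gf Df]] Hg [pg [Gg Dg]]].
  - exists (fun u => (-1) * Kn 0%nat u + (- / 2) * (w u * w u)). split.
    + apply g_p; apply g_m; try apply g_c; try apply g_K; try apply g_m; apply g_w.
    + intros u Hu. replace ((-1) * Kn 0%nat u + (- / 2) * (w u * w u)) with (- Kn 0%nat u - / 2 * (w u * w u)) by ring. auto.
  - exists (Kn (S n)). split; [apply g_K|auto].
  - exists (fun _ => 0). split; [apply g_c|]. intros. apply derivable_pt_lim_const.
  - exists (fun u => pf u + pg u). split; [apply g_p; auto|].
    intros u Hu. apply (derivable_pt_lim_plus f g); auto.
  - exists (fun u => pf u * g u + f u * pg u). split.
    + apply g_p; apply g_m; auto.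
    + intros u Hu. apply (derivable_pt_lim_mult f g); auto.
Qed.

Definition gstep (phi : R -> R) : R -> R :=
  epsilon (inhabits (fun _ : R => 0)) (fun psi => gen w Kn psi /\ forall u, I u -> derivable_pt_lim phi u (psi u)).

Fixpoint Wn (n : nat) : R -> R := match n with O => w | S n => gstep (Wn n) end.

Lemma Wn_prop n : gen w Kn (Wn n) /\ forall u, I u -> derivable_pt_lim (Wn n) u (Wn (S n) u).
Proof.
  induction n as [|n [IHg _]].
  - pose proof (gen_deriv w (g_w w Kn)) as E. simpl.
    pose proof (epsilon_spec (inhabits (fun _ : R => 0)) _ E) as [G D]. split; [apply g_w|exact D].
  - pose proof (gen_deriv _ IHg) as E.
    pose proof (epsilon_spec (inhabits (fun _ : R => 0)) _ E) as [G D].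
    simpl. split; [exact G|].
    pose proof (gen_deriv _ G) as E2.
    pose proof (epsilon_spec (inhabits (fun _ : R => 0)) _ E2) as [G2 D2]. exact D2.
Qed.
End Gen.

Section Forward.
Variables (H : R -> R -> R -> R) (U : pt -> Prop) (D : list nat -> pt -> R).
Hypothesis HU : is_open U.
Hypothesis HD0 : forall p, U p -> D nil p = Hof H p.
Hypothesis HD1 : forall l i p, (i < 4)%nat -> U p ->
        derivable_pt_lim (fun t => D l (upd p i t)) (coord p i) (D (i :: l) p).
Hypothesis HD2 : forall l, cont_on U (D l).

Variables (V : pt -> Prop) (f : pt -> R) (Df : list nat -> pt -> R) (lam : pt -> R).
Hypothesis HV : is_open V.
Hypothesis HVU : forall q, V q -> U q.
Hypothesis HF0 : forall p, V p -> Df nil p = f p.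
Hypothesis HF1 : forall l i p, (i < 4)%nat -> V p ->
        derivable_pt_lim (fun t => Df l (upd p i t)) (coord p i) (Df (i :: l) p).
Hypothesis HF2 : forall l, cont_on V (Df l).
Hypothesis Hgrad : forall q, V q -> exists i, (i < 4)%nat /\ grad (ppw_gi H) f i q <> 0.
Hypothesis Hnull : forall q, V q -> sum4 (fun i => sum4 (fun j => ppw_gi H q i j * pd i f q * pd j f q)) = 0.
Hypothesis Heq : forall q i j, V q -> (i < 4)%nat -> (j < 4)%nat ->
        Hess (ppw_g H) (ppw_gi H) f i j q + Ric (ppw_g H) (ppw_gi H) i j q + / 2 * (pd i f q * pd j f q) = lam q * ppw_g H q i j.

Lemma pdf i q : V q -> (i < 4)%nat -> pd i f q = Df (i :: nil) q.
Proof.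
  intros. rewrite (loc_pd V f (Df nil)); auto.
  - apply pd_eq; auto.
  - intros; symmetry; auto.
Qed.

Lemma pdpdf i j q : V q -> (i < 4)%nat -> (j < 4)%nat -> pd i (fun q => pd j f q) q = Df (i :: j :: nil) q.
Proof.
  intros. rewrite (loc_pd V _ (Df (j :: nil))); auto.
  - apply pd_eq; auto.
  - intros; apply pdf; auto.
Qed.

Notation a k q := (Df (k :: nil)%nat q).
Notation b m k q := (Df (m :: k :: nil)%nat q).
Notation hd k q := (D (k :: nil)%nat q).

Lemma null_expl q : V q -> 2 * a 0 q * a 1 q - D nil q * a 1 q ^ 2 + a 2 q ^ 2 + a 3 q ^ 2 = 0.
Proof.
  intros Hq. rewrite <- (Hnull q Hq). unfold sum4. cbv beta iota delta [ppw_gi].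
  rewrite !pdf by (auto; lia). rewrite HD0 by auto. ring.
Qed.

Lemma E_expl q i j : V q -> (i < 4)%nat -> (j < 4)%nat ->
  b i j q - sum4 (fun k => G H k i j q * a k q) + RicV D i j q + / 2 * (a i q * a j q) = lam q * ppw_g H q i j.
Proof.
  intros Hq Hi Hj. rewrite <- (Heq q i j Hq Hi Hj). unfold Hess.
  rewrite pdpdf by auto. rewrite (Ric_val H U D) by auto. unfold sum4.
  rewrite !Gam_val, !pdf by (auto; lia). reflexivity.
Qed.

Lemma dN q m : V q -> (m < 4)%nat ->
  2 * (b m 0 q * a 1 q + a 0 q * b m 1 q) - (hd m q * (a 1 q * a 1 q) + D nil q * (2 * a 1 q * b m 1 q))
  + 2 * a 2 q * b m 2 q + 2 * a 3 q * b m 3 q = 0.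
Proof.
  intros Hq Hm.
  pose (Phi := fun t => 2 * a 0 (upd q m t) * a 1 (upd q m t) - D nil (upd q m t) * (a 1 (upd q m t) * a 1 (upd q m t))
     + a 2 (upd q m t) * a 2 (upd q m t) + a 3 (upd q m t) * a 3 (upd q m t)).
  assert (D1 : derivable_pt_lim Phi (coord q m) 0).
  { destruct (HV q Hq) as [e [He He2]].
    apply (dpl_local (fun _ => 0) Phi _ _ e He); [|apply dpl_const].
    intros t Ht. assert (V (upd q m t)) by (apply He2, dist4_upd; auto).
    unfold Phi. pose proof (null_expl _ H0). nra. }
  assert (D2 : derivable_pt_lim Phi (coord q m)
     (2 * (b m 0 q * a 1 q + a 0 q * b m 1 q) - (hd m q * (a 1 q * a 1 q) + D nil q * (2 * a 1 q * b m 1 q))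
  + 2 * a 2 q * b m 2 q + 2 * a 3 q * b m 3 q)).
  { unfold Phi. eapply dpl_eq. dchain; try (apply HF1; auto); try (apply HD1; auto).
    cbv beta. rewrite ?upd_coord. ring. }
  eapply uniqueness_limite; eassumption.
Qed.

Lemma E_b q i j : V q -> (i < 4)%nat -> (j < 4)%nat ->
  b i j q = lam q * ppw_g H q i j + sum4 (fun k => G H k i j q * a k q) - RicV D i j q - / 2 * (a i q * a j q).
Proof. intros. pose proof (E_expl q i j H0 H1 H2). lra. Qed.

Lemma hd1 q : U q -> hd 1 q = 0.
Proof. intros. rewrite <- (HdD H U D) by (auto; lia). apply Hd1. Qed.

Lemma lam_rel q m : V q -> (m < 4)%nat ->
  lam q * a m q = (match m with O => a 1 q * RicV D 0 0 q | _ => 0 end).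
Proof.
  intros Hq Hm. pose proof (dN q m Hq Hm) as E. pose proof (null_expl q Hq) as N.
  assert (Uq : U q) by auto.
  destruct m as [|[|[|[|m]]]]; try lia;
  rewrite !E_b in E by (auto; lia); unfold sum4 in E; cbv beta iota delta [G RicV ppw_g] in E |- *;
  rewrite ?(HdD H U D) in E by (auto; lia); rewrite ?HD0 in E, N by auto;
  rewrite ?HD0 in E by auto; rewrite ?hd1 in E by auto;
  match type of E with ?L = 0 => match type of N with ?X = 0 => match goal with |- lam q * ?Am = ?B =>
    assert (Z : 2 * (lam q * Am - B) = L + Am * X) by field end end end;
  rewrite E, N in Z; lra.
Qed.

Lemma lam0 q : V q -> lam q = 0.
Proof.
  intros Hq. destruct (Req_dec (lam q) 0) as [E|E]; auto. exfalso.
  assert (Uq : U q) by auto.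
  pose proof (lam_rel q 1 Hq ltac:(lia)) as E1; pose proof (lam_rel q 2 Hq ltac:(lia)) as E2;
  pose proof (lam_rel q 3 Hq ltac:(lia)) as E3; pose proof (lam_rel q 0 Hq ltac:(lia)) as E0.
  simpl in E1, E2, E3, E0.
  assert (A1 : a 1 q = 0) by (apply (Rmult_eq_reg_l (lam q)); auto; lra).
  assert (A2 : a 2 q = 0) by (apply (Rmult_eq_reg_l (lam q)); auto; lra).
  assert (A3 : a 3 q = 0) by (apply (Rmult_eq_reg_l (lam q)); auto; lra).
  rewrite A1 in E0. assert (A0 : a 0 q = 0) by (apply (Rmult_eq_reg_l (lam q)); auto; lra).
  destruct (Hgrad q Hq) as [i [Hi Hg]]. apply Hg. unfold grad, sum4.
  rewrite !pdf by (auto; lia). rewrite A0, A1, A2, A3.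
  destruct i as [|[|[|[|i]]]]; try lia; cbv beta iota delta [ppw_gi]; ring.
Qed.

Lemma ra1 q : V q -> a 1 q * RicV D 0 0 q = 0.
Proof. intros Hq. pose proof (lam_rel q 0 Hq ltac:(lia)) as E. rewrite lam0 in E by auto. change (0 * a 0 q = a 1 q * RicV D 0 0 q) in E. lra. Qed.

Lemma forward_at p : V p -> pd 2 (Ric (ppw_g H) (ppw_gi H) 0 0) p = 0 /\ pd 3 (Ric (ppw_g H) (ppw_gi H) 0 0) p = 0.
Proof.
  intros Vp.
  destruct (Req_dec (a 1 p) 0) as [Z|NZ].
  2:{
    assert (Hc := HF2 (1%nat :: nil) p Vp (Rabs (a 1 p) / 2) ltac:(pose proof (Rabs_pos_lt _ NZ); lra)).
    destruct Hc as [del [Hdel Hc]].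
    set (W := fun q => V q /\ dist4 p q < del).
    assert (OW : is_open W) by (apply open_inter; auto; apply ball_open).
    assert (WR : forall q, W q -> Ric (ppw_g H) (ppw_gi H) 0 0 q = 0).
    { intros q [Vq Dq]. rewrite (Ric_val H U D) by auto.
      pose proof (ra1 q Vq) as R. pose proof (Hc q Vq Dq) as C.
      assert (a 1 q <> 0).
      { intro Z. rewrite Z in C. rewrite Rminus_0_l, Rabs_Ropp in C. pose proof (Rabs_pos_lt _ NZ). lra. }
      apply (Rmult_eq_reg_l (a 1 q)); auto. lra. }
    assert (Wp : W p) by (split; auto; rewrite dist4_refl; auto).
    split; rewrite (loc_pd W _ (fun _ => 0)); auto; apply pd_const. }
  destruct (HV p Vp) as [e [He HeV]].
  set (B := fun q => dist4 p q < e).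
  assert (BV : forall q, B q -> V q) by (intros; apply HeV; auto).
  assert (BU : forall q, B q -> U q) by auto.
  assert (Bp : B p) by (unfold B; rewrite dist4_refl; auto).
  assert (OB : is_open B) by apply ball_open.
  assert (Z1 : forall q, B q -> a 1 q = 0).
  { assert (ZC : forall q, B q -> a 1 q * exp (/ 2 * Df nil q) = a 1 p * exp (/ 2 * Df nil p)).
    { apply ball_const; auto. intros q m Bq Hm.
      eapply dpl_eq. { apply dpl_mult; [apply HF1; auto|]. apply dpl_exp. apply dpl_scal. apply HF1; auto. }
      cbv beta. rewrite upd_coord. rewrite E_b by (auto; lia). rewrite lam0 by auto.
      unfold sum4. destruct m as [|[|[|[|m]]]]; try lia; cbv beta iota delta [G RicV ppw_g]; field. }
    intros q Bq. pose proof (ZC q Bq) as Zq. rewrite Z, Rmult_0_l in Zq.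
    pose proof (exp_pos (/ 2 * Df nil q)). nra. }
  assert (Z23 : forall q, B q -> a 2 q = 0 /\ a 3 q = 0).
  { intros q Bq. pose proof (null_expl q (BV q Bq)) as N. rewrite Z1 in N by auto. split; nra. }
  assert (Zb : forall q k, B q -> (k = 2 \/ k = 3)%nat -> b k 0 q = 0).
  { intros q k Bq Hk. rewrite E_b by (auto; lia). rewrite lam0 by auto. unfold sum4.
    destruct (Z23 q Bq) as [Z2 Z3]. pose proof (Z1 q Bq) as Z1q.
    destruct Hk as [->| ->]; cbv beta iota delta [G RicV ppw_g]; rewrite Z1q, ?Z2, ?Z3; ring. }
  assert (RB : forall q, B q -> Ric (ppw_g H) (ppw_gi H) 0 0 q = - b 0 0 q - / 2 * (a 0 q * a 0 q)).
  { intros q Bq. rewrite (Ric_val H U D) by auto.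
    pose proof (E_b q 0 0 (BV q Bq) ltac:(lia) ltac:(lia)) as E. rewrite lam0 in E by auto.
    unfold sum4 in E. destruct (Z23 q Bq) as [Z2 Z3]. rewrite Z1, Z2, Z3 in E by auto.
    cbv beta iota delta [G ppw_g] in E. lra. }
  assert (KEY : forall k, (k = 2 \/ k = 3)%nat -> Df (k :: 0 :: 0 :: nil)%nat p = 0).
  { intros k Hk. assert (Hk4 : (k < 4)%nat) by lia.
    assert (C1 : forall q s, B q -> Rabs (s - coord p k) < e -> a 0 (upd q k s) = a 0 q).
    { apply (step_const (Df (0%nat :: nil)) p e k Hk4). intros q Bq.
      rewrite <- (Zb q k Bq Hk). apply HF1; auto. }
    assert (C2 : forall t, Rabs (t - coord p k) < e -> b 0 0 (upd p k t) = b 0 0 p).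
    { intros t Ht. assert (Bt : B (upd p k t)) by (apply dist4_upd; auto).
      pose proof (HF1 (0%nat :: nil) 0 (upd p k t) ltac:(lia) (BV _ Bt)) as D1.
      rewrite coord_upd_other in D1 by lia.
      pose proof (HF1 (0%nat :: nil) 0 p ltac:(lia) Vp) as D2.
      eapply uniqueness_limite; [exact D1|].
      apply (dpl_local (fun s => a 0 (upd p 0 s)) _ _ _ e He); auto.
      intros s Hs. rewrite upd_comm by lia. symmetry. apply C1; auto.
      apply dist4_upd; auto. }
    eapply uniqueness_limite; [apply HF1; auto|].
    apply (dpl_local (fun _ => b 0 0 p) _ _ _ e He); [|apply dpl_const].
    intros t Ht. symmetry. apply C2; auto. }
  split; rewrite (loc_pd B _ (fun q => - b 0 0 q - / 2 * (a 0 q * a 0 q))); auto;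
    (apply pd_eq; eapply dpl_eq; [dchain; try (apply dpl_scal); dchain; apply HF1; auto|]);
    cbv beta; rewrite ?upd_coord; rewrite KEY, Zb by auto; ring.
Qed.
End Forward.

Section Backward.
Variables (H : R -> R -> R -> R) (U : pt -> Prop) (D : list nat -> pt -> R).
Hypothesis HU : is_open U.
Hypothesis HD0 : forall p, U p -> D nil p = Hof H p.
Hypothesis HD1 : forall l i p, (i < 4)%nat -> U p ->
        derivable_pt_lim (fun t => D l (upd p i t)) (coord p i) (D (i :: l) p).
Hypothesis HD2 : forall l, cont_on U (D l).
Hypothesis HR : forall q, U q -> pd 2 (Ric (ppw_g H) (ppw_gi H) 0 0) q = 0 /\ pd 3 (Ric (ppw_g H) (ppw_gi H) 0 0) q = 0.

Definition RV q := RicV D 0 0 q.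

Lemma RV_deriv q m : U q -> (m < 4)%nat ->
  derivable_pt_lim (fun t => RV (upd q m t)) (coord q m)
    (- / 2 * (D (m :: 2 :: 2 :: nil)%nat q + D (m :: 3 :: 3 :: nil)%nat q)).
Proof.
  intros. cbv beta iota delta [RV RicV]. apply dpl_scal. apply dpl_plus; apply HD1; auto.
Qed.

Lemma RV_deriv0 q m : U q -> (m = 1 \/ m = 2 \/ m = 3)%nat ->
  derivable_pt_lim (fun t => RV (upd q m t)) (coord q m) 0.
Proof.
  intros Uq Hm. assert (Hm4 : (m < 4)%nat) by lia.
  eapply dpl_eq; [apply RV_deriv; [exact Uq|exact Hm4]|].
  assert (P : pd m RV q = - / 2 * (D (m :: 2 :: 2 :: nil)%nat q + D (m :: 3 :: 3 :: nil)%nat q))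
    by (apply pd_eq, RV_deriv; [exact Uq|exact Hm4]).
  assert (P2 : pd m (Ric (ppw_g H) (ppw_gi H) 0 0) q = pd m RV q).
  { apply (loc_pd U); [exact HU|exact Uq|]. intros r Ur. unfold RV. apply (Ric_val H U D HU HD0 HD1); auto; lia. }
  rewrite <- P, <- P2.
  destruct Hm as [->|[->| ->]].
  - apply pd1_vind, Ric_vind.
  - exact (proj1 (HR q Uq)).
  - exact (proj2 (HR q Uq)).
Qed.


Variable p : pt.
Variable e0 : R.
Hypothesis He0 : 0 < e0.
Hypothesis HB0 : forall q, dist4 p q < e0 -> U q.

Lemma RV_fun_u q : dist4 p q < e0 -> RV q = RV (upd p 0 (coord q 0)).
Proof.
  intros Hq.
  assert (S : forall m r, (m = 1 \/ m = 2 \/ m = 3)%nat -> dist4 p r < e0 -> RV (upd r m (coord p m)) = RV r).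
  { intros m r Hm Hr. apply (step_const RV p e0 m); [lia| |exact Hr|].
    - intros q' Hq'. apply RV_deriv0; [apply HB0; exact Hq'|exact Hm].
    - rewrite Rminus_diag, Rabs_R0; exact He0. }
  pose (q1 := upd q 1 (coord p 1)). pose (q2 := upd q1 2 (coord p 2)).
  assert (B1 : dist4 p q1 < e0) by (apply in_ball_upd; [lia|exact He0|exact Hq]).
  assert (B2 : dist4 p q2 < e0) by (apply in_ball_upd; [lia|exact He0|exact B1]).
  rewrite <- (S 1%nat q) by (lia || exact Hq). fold q1. rewrite <- (S 2%nat q1) by (lia || exact B1). fold q2.
  rewrite <- (S 3%nat q2) by (lia || exact B2). f_equal. unfold q2, q1. dpt p. dpt q. reflexivity.
Qed.

Definition rep0 n := repeat 0%nat n.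
Definition Kn (n : nat) (u : R) : R :=
  - / 2 * (D (rep0 n ++ (2 :: 2 :: nil))%nat (upd p 0 u) + D (rep0 n ++ (3 :: 3 :: nil))%nat (upd p 0 u)).

Lemma Kn_deriv n u : Rabs (u - coord p 0) < e0 -> derivable_pt_lim (Kn n) u (Kn (S n) u).
Proof.
  intros Hu. assert (Uu : U (upd p 0 u)) by (apply HB0, dist4_upd; [exact He0|exact Hu]).
  unfold Kn. apply dpl_scal.
  pose proof (HD1 (rep0 n ++ (2 :: 2 :: nil))%nat 0 (upd p 0 u) ltac:(lia) Uu) as D1.
  pose proof (HD1 (rep0 n ++ (3 :: 3 :: nil))%nat 0 (upd p 0 u) ltac:(lia) Uu) as D2.
  rewrite coord_upd_same in D1, D2 by lia.
  apply dpl_plus; (eapply derivable_pt_lim_ext; [|eassumption]); intro t; simpl; rewrite upd_upd_same; reflexivity.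
Qed.

Lemma K0_RV u : Kn 0 u = RV (upd p 0 u).
Proof. reflexivity. Qed.


Lemma coord0_upd q j t : j <> 0%nat -> coord (upd q j t) 0 = coord q 0.
Proof. intros. dpt q. destruct j as [|[|[|[|j]]]]; try lia; reflexivity. Qed.

Lemma exists_einstein : exists V : pt -> Prop, is_open V /\ V p /\ (forall q, V q -> U q) /\
    exists f : pt -> R, smooth_on V f /\
      (forall q, V q -> exists i, (i < 4)%nat /\ grad (ppw_gi H) f i q <> 0) /\
      (forall q, V q -> sum4 (fun i => sum4 (fun j => ppw_gi H q i j * pd i f q * pd j f q)) = 0) /\
      exists lam : pt -> R, forall q i j, V q -> (i < 4)%nat -> (j < 4)%nat ->
        Hess (ppw_g H) (ppw_gi H) f i j q + Ric (ppw_g H) (ppw_gi H) i j q + / 2 * (pd i f q * pd j f q) = lam q * ppw_g H q i j.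
Proof.
  set (u0 := coord p 0).
  set (k := fun u => - / 2 * Kn 0 u).
  assert (Hk : forall u, Rabs (u - u0) < e0 -> cont_at k u).
  { intros u Hu. apply (deriv_cont_at k u (- / 2 * Kn 1 u)). unfold k. apply dpl_scal. apply Kn_deriv. exact Hu. }
  destruct (ode_exists k u0 e0 He0 Hk) as [del [c [d [Hdel [Hdele Hcd]]]]].
  set (I := fun u => Rabs (u - u0) < del).
  set (w := fun u => 2 * d u / c u).
  assert (Hw : forall u, I u -> derivable_pt_lim w u (- Kn 0%nat u - / 2 * (w u * w u))).
  { intros u Hu. destruct (Hcd u Hu) as [Dc [Dd [Pc Pd]]].
    eapply dpl_eq.
    - apply (derivable_pt_lim_div (fun u => 2 * d u) c); [apply dpl_scal; exact Dd|exact Dc|lra].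
    - unfold w, k, Rsqr. field. lra. }
  assert (HK : forall n u, I u -> derivable_pt_lim (Kn n) u (Kn (S n) u)).
  { intros n u Hu. apply Kn_deriv. unfold I in Hu. fold u0. lra. }
  set (F := fun u => 2 * ln (c u)).
  assert (HF : forall u, I u -> derivable_pt_lim F u (w u)).
  { intros u Hu. destruct (Hcd u Hu) as [Dc [Dd [Pc Pd]]].
    eapply dpl_eq.
    - apply dpl_scal. apply (derivable_pt_lim_comp c ln); [exact Dc|apply derivable_pt_lim_ln; exact Pc].
    - unfold w. field. lra. }
  set (Fs := fun n => match n with O => F | S m => Wn w Kn I m end).
  assert (HFs : forall n u, I u -> derivable_pt_lim (Fs n) u (Fs (S n) u)).
  { intros n u Hu. destruct n as [|m].
    - simpl. exact (HF u Hu).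
    - simpl. exact (proj2 (Wn_prop w Kn I Hw HK m) u Hu). }
  set (V := fun q => dist4 p q < del).
  assert (VU : forall q, V q -> U q) by (intros q Hq; apply HB0; unfold V in Hq; lra).
  assert (VI : forall q, V q -> I (coord q 0)).
  { intros q Hq. unfold I, u0. rewrite Rabs_minus_sym. apply dist4_lt_inv; [lia|exact Hq]. }
  assert (OV : is_open V) by apply ball_open.
  assert (Vp : V p) by (unfold V; rewrite dist4_refl; exact Hdel).
  set (f := fun q => F (coord q 0)).
  assert (pdfv : forall j q, V q -> pd j f q = if Nat.eqb j 0 then w (coord q 0) else 0).
  { intros j q Hq. apply pd_eq. destruct (Nat.eqb_spec j 0) as [->|Hj].
    - eapply derivable_pt_lim_ext; [|exact (HF _ (VI q Hq))]. intro t. unfold f. rewrite coord_upd_same by lia. reflexivity.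
    - eapply derivable_pt_lim_ext; [|apply (derivable_pt_lim_const (f q))]. intro t. unfold f. rewrite coord0_upd by exact Hj. reflexivity. }
  assert (pdpdfv : forall i j q, V q -> pd i (fun r => pd j f r) q =
            if Nat.eqb j 0 then (if Nat.eqb i 0 then - Kn 0%nat (coord q 0) - / 2 * (w (coord q 0) * w (coord q 0)) else 0) else 0).
  { intros i j q Hq. rewrite (loc_pd V _ (fun r => if Nat.eqb j 0 then w (coord r 0) else 0) i q OV Hq)
      by (intros r Hr; apply pdfv; exact Hr).
    destruct (Nat.eqb j 0).
    - apply pd_eq. destruct (Nat.eqb_spec i 0) as [->|Hi].
      + eapply derivable_pt_lim_ext; [|exact (Hw _ (VI q Hq))]. intro t. rewrite coord_upd_same by lia. reflexivity.
      + eapply derivable_pt_lim_ext; [|apply (derivable_pt_lim_const (w (coord q 0)))]. intro t. rewrite coord0_upd by exact Hi. reflexivity.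
    - apply pd_const. }
  assert (RicU : forall i j q, V q -> (i < 4)%nat -> (j < 4)%nat ->
            Ric (ppw_g H) (ppw_gi H) i j q = match i, j with O, O => Kn 0 (coord q 0) | _, _ => 0 end).
  { intros i j q Hq Hi Hj. rewrite (Ric_val H U D HU HD0 HD1 i j q (VU q Hq) Hi Hj).
    destruct i as [|[|[|[|i]]]]; destruct j as [|[|[|[|j]]]]; try lia; try reflexivity.
    change (RV q = Kn 0 (coord q 0)). rewrite K0_RV. apply RV_fun_u. unfold V in Hq. lra. }
  exists V. split; [exact OV|]. split; [exact Vp|]. split; [exact VU|].
  exists f. split; [|split; [|split]].
  -
    exists (fun l q => if forallb (Nat.eqb 0) l then Fs (length l) (coord q 0) else 0). split; [|split].
    + intros q Hq. reflexivity.
    + intros l i q Hi Hq. destruct (forallb (Nat.eqb 0) l) eqn:Hl.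
      * destruct i as [|i'].
        -- assert (E0 : forallb (Nat.eqb 0) (0%nat :: l) = true) by (change (andb (Nat.eqb 0 0) (forallb (Nat.eqb 0) l) = true); rewrite Hl; reflexivity).
           rewrite E0. cbv beta. change (length (0%nat :: l)) with (S (length l)).
           eapply derivable_pt_lim_ext; [|exact (HFs _ _ (VI q Hq))]. intro t. rewrite coord_upd_same by lia. reflexivity.
        -- assert (E0 : forallb (Nat.eqb 0) (S i' :: l) = false) by reflexivity. rewrite E0. cbv beta.
           eapply derivable_pt_lim_ext; [|apply (derivable_pt_lim_const (Fs (length l) (coord q 0)))]. intro t. rewrite coord0_upd by lia. reflexivity.
      * assert (E0 : forallb (Nat.eqb 0) (i :: l) = false) by (change (andb (Nat.eqb 0 i) (forallb (Nat.eqb 0) l) = false); rewrite Hl; destruct (Nat.eqb 0 i); reflexivity).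
        rewrite E0. cbv beta. eapply derivable_pt_lim_ext; [|apply (derivable_pt_lim_const 0)]. intro t. reflexivity.
    + intros l q Hq eps Heps. destruct (forallb (Nat.eqb 0) l).
      * pose proof (HFs (length l) _ (VI q Hq)) as Dq. destruct (deriv_cont_at _ _ _ Dq eps Heps) as [dl [Hdl Hc]].
        exists dl. split; [exact Hdl|]. intros r Hr Dr. apply Hc. rewrite Rabs_minus_sym. apply dist4_lt_inv; [lia|exact Dr].
      * exists 1. split; [lra|]. intros. rewrite Rminus_diag, Rabs_R0. exact Heps.
  - intros q Hq. exists 1%nat. split; [lia|]. unfold grad, sum4. rewrite !pdfv by exact Hq. simpl.
    destruct (Hcd _ (VI q Hq)) as [_ [_ [Pc Pd]]]. unfold w.
    assert (0 < 2 * d (coord q 0) / c (coord q 0)) by (apply Rdiv_lt_0_compat; lra). lra.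
  - intros q Hq. unfold sum4. rewrite !pdfv by exact Hq. simpl. ring.
  - exists (fun _ => 0). intros q i j Hq Hi Hj. unfold Hess, sum4.
    rewrite !Gam_val, !pdfv, pdpdfv, RicU by (exact Hq || exact Hi || exact Hj).
    destruct i as [|[|[|[|i]]]]; destruct j as [|[|[|[|j]]]]; try lia; cbv beta iota delta [G ppw_g Nat.eqb]; ring.
Qed.

End Backward.

Theorem corollary3p5 (H : R -> R -> R -> R) (U : pt -> Prop) :
  is_open U -> smooth_on U (Hof H) ->
  (loc_iso_conf_Einstein (ppw_g H) (ppw_gi H) U <-> harmonic_Weyl (ppw_g H) (ppw_gi H) U).
Proof.
  intros HU [D [HD0 [HD1 HD2]]].
  rewrite (harmonic_iff H U D HU HD0 HD1).
  split.
  - intros HE p Up.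
    destruct (HE p Up) as [V [OV [Vp [VU [f [[Df [HF0 [HF1 HF2]]] [Hg [Hn [lam Heq]]]]]]]]].
    exact (forward_at H U D HU HD0 HD1 V f Df lam OV VU HF0 HF1 HF2 Hg Hn Heq p Vp).
  - intros HR p Up. destruct (HU p Up) as [e0 [He0 HB0]].
    exact (exists_einstein H U D HU HD0 HD1 HR p e0 He0 HB0).
Qed.
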